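(* For $\alpha\in\mathbb R\setminus\{0\}$ let $\phi_\alpha:\mathbb R\to\mathbb R$ be $\phi_\alpha(x)=x^\alpha$ for $x\ge0$ and $\phi_\alpha(x)=-(-x)^\alpha$ for $x<0$ (with $\phi_\alpha(0)=0$), and let $x+_{\phi_\alpha}y=\phi_\alpha^{-1}(\phi_\alpha(x)+\phi_\alpha(y))$. Let $P=\prod_{\alpha\in\mathbb R\setminus\{0\}}\mathbb R$ be the full direct product, with addition $(x_\alpha)+(y_\alpha)=(x_\alpha+_{\phi_\alpha}y_\alpha)$ and scalar multiplication $\lambda(x_\alpha)=(\lambda x_\alpha)$, $\lambda\in\mathbb R$. Then the quasi-kernel of $P$ is $Q(P)=\bigcup_{\alpha\in\mathbb R\setminus\{0\}}\mathbb R\mathbf e_\alpha$, where $\mathbf e_\alpha=(\delta_{\alpha,\beta})_{\beta}$, and consequently $P$ is not a near-vector space over $\mathbb R$.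
   Context: Here $\mathbb R$ is regarded as the scalar group $(\mathbb R,\cdot,1,0,-1)$. For an abelian group $V$ with an action of $(\mathbb R,\cdot)$ by endomorphisms, the quasi-kernel is $Q(V)=\{u:\forall a,b\in\mathbb R\ \exists\gamma\in\mathbb R,\ au+bu=\gamma u\}$. A near-vector space over $\mathbb R$ is such a $V$ in which $0,1,-1$ act as $0,\mathrm{id},-\mathrm{id}$, the action is free (for $u\ne0$, $au=bu\Rightarrow a=b$), and $Q(V)$ generates $V$ as an additive group. $\delta_{\alpha,\beta}$ is $1$ if $\alpha=\beta$ and $0$ otherwise. *)

(* Defs.v *)
From Stdlib Require Import Reals.
Open Scope R_scope.

Section General.
Variables (V : Type) (add : V -> V -> V) (zero : V) (neg : V -> V)
          (smul : R -> V -> V).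

Definition quasi_kernel (u : V) : Prop :=
  forall a b : R, exists g : R, add (smul a u) (smul b u) = smul g u.

Inductive gen_subgroup (S : V -> Prop) : V -> Prop :=
| gs_zero : gen_subgroup S zero
| gs_in : forall u, S u -> gen_subgroup S u
| gs_neg : forall u, gen_subgroup S u -> gen_subgroup S (neg u)
| gs_add : forall u v, gen_subgroup S u -> gen_subgroup S v ->
           gen_subgroup S (add u v).

Definition near_vector_space : Prop :=
  (forall u v w, add u (add v w) = add (add u v) w) /\
  (forall u v, add u v = add v u) /\
  (forall u, add zero u = u) /\
  (forall u, add (neg u) u = zero) /\
  (forall a u v, smul a (add u v) = add (smul a u) (smul a v)) /\
  (forall a b u, smul (a * b) u = smul a (smul b u)) /\
  (forall u, smul 0 u = zero) /\
  (forall u, smul 1 u = u) /\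
  (forall u, smul (-1) u = neg u) /\
  (forall u a b, u <> zero -> smul a u = smul b u -> a = b) /\
  (forall v, gen_subgroup quasi_kernel v).
End General.

Definition phi (alpha x : R) : R :=
  if Rlt_dec 0 x then Rpower x alpha
  else if Rlt_dec x 0 then - Rpower (- x) alpha else 0.

Definition phi_inv (alpha y : R) : R := phi (/ alpha) y.

Definition phi_add (alpha x y : R) : R := phi_inv alpha (phi alpha x + phi alpha y).

Definition nzR := {a : R | a <> 0}.
Definition P := nzR -> R.

Definition addP (x y : P) : P := fun a => phi_add (proj1_sig a) (x a) (y a).
Definition zeroP : P := fun _ => 0.
Definition negP (x : P) : P := fun a => - x a.
Definition smulP (l : R) (x : P) : P := fun a => l * x a.

Definition e (alpha : nzR) : P :=
  fun beta => if Req_EM_T (proj1_sig alpha) (proj1_sig beta) then 1 else 0.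

(* Main.v *)
Require Import Defs.
From Stdlib Require Import Reals Lra List Classical FunctionalExtensionality ProofIrrelevance.
Open Scope R_scope.

Lemma phi_pos a x : 0 < x -> phi a x = Rpower x a.
Proof. intro H; unfold phi; destruct (Rlt_dec 0 x); [reflexivity|lra]. Qed.
Lemma phi_neg a x : x < 0 -> phi a x = - Rpower (- x) a.
Proof. intro H; unfold phi; destruct (Rlt_dec 0 x); [lra|].
  destruct (Rlt_dec x 0); [reflexivity|lra]. Qed.
Lemma phi_0 a : phi a 0 = 0.
Proof. unfold phi; destruct (Rlt_dec 0 0); [lra|]. destruct (Rlt_dec 0 0); [lra|reflexivity]. Qed.
Lemma Rpower_pos x a : 0 < Rpower x a.
Proof. unfold Rpower; apply exp_pos. Qed.
Lemma Rpower_base1 a : Rpower 1 a = 1.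
Proof. unfold Rpower; rewrite ln_1, Rmult_0_r; apply exp_0. Qed.

Lemma phi_mul a x y : phi a (x * y) = phi a x * phi a y.
Proof.
  destruct (Rtotal_order x 0) as [Hx|[Hx|Hx]];
  destruct (Rtotal_order y 0) as [Hy|[Hy|Hy]];
  try (subst; rewrite ?Rmult_0_l, ?Rmult_0_r, !phi_0; ring).
  - rewrite !(phi_neg _ x), !(phi_neg _ y) by lra.
    replace (x*y) with ((-x)*(-y)) by ring.
    rewrite phi_pos by (apply Rmult_lt_0_compat; lra).
    rewrite <- Rpower_mult_distr by lra. ring.
  - assert (0 < (-x)*y) by (apply Rmult_lt_0_compat; lra).
    rewrite (phi_neg _ (x*y)) by lra. rewrite phi_neg by lra. rewrite (phi_pos _ y) by lra.
    replace (-(x*y)) with ((-x)*y) by ring.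
    rewrite <- Rpower_mult_distr by lra. ring.
  - assert (0 < x*(-y)) by (apply Rmult_lt_0_compat; lra).
    rewrite (phi_neg _ (x*y)) by lra. rewrite (phi_neg _ y) by lra. rewrite (phi_pos _ x) by lra.
    replace (-(x*y)) with (x*(-y)) by ring.
    rewrite <- Rpower_mult_distr by lra. ring.
  - rewrite !phi_pos by (try apply Rmult_lt_0_compat; lra). rewrite <- Rpower_mult_distr by lra. ring.
Qed.

Lemma phi_inv_phi a x : a <> 0 -> phi (/ a) (phi a x) = x.
Proof.
  intro Ha.
  destruct (Rtotal_order x 0) as [Hx|[Hx|Hx]].
  - rewrite (phi_neg a x) by lra.
    pose proof (Rpower_pos (-x) a).
    rewrite phi_neg by lra. rewrite Ropp_involutive, Rpower_mult.
    rewrite Rinv_r by exact Ha. rewrite Rpower_1 by lra. ring.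
  - subst; rewrite !phi_0; reflexivity.
  - rewrite (phi_pos a x) by lra.
    pose proof (Rpower_pos x a).
    rewrite phi_pos by lra. rewrite Rpower_mult.
    rewrite Rinv_r by exact Ha. rewrite Rpower_1 by lra. ring.
Qed.

Definition k (al a b : R) := phi (/ al) (phi al a + phi al b).

Lemma phi_add_lin al a b x : al <> 0 -> phi_add al (a * x) (b * x) = k al a b * x.
Proof.
  intro H. unfold phi_add, phi_inv, k. rewrite !phi_mul.
  replace (phi al a * phi al x + phi al b * phi al x) with
    ((phi al a + phi al b) * phi al x) by ring.
  rewrite phi_mul, phi_inv_phi by exact H. reflexivity.
Qed.

Lemma k11 al : k al 1 1 = Rpower 2 (/ al).
Proof.
  unfold k. rewrite (phi_pos al 1) by lra. rewrite Rpower_base1.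
  rewrite phi_pos by lra. reflexivity.
Qed.

Lemma k11_inj al be : al <> 0 -> be <> 0 -> k al 1 1 = k be 1 1 -> al = be.
Proof.
  intros Ha Hb H. rewrite !k11 in H. unfold Rpower in H.
  apply exp_inv in H.
  assert (0 < ln 2) by (rewrite <- ln_1; apply ln_increasing; lra).
  assert (/ al = / be) by nra.
  rewrite <- (Rinv_inv al), <- (Rinv_inv be). rewrite H1. reflexivity.
Qed.

Lemma sig_eq_nz (x y : nzR) : proj1_sig x = proj1_sig y -> x = y.
Proof.
  destruct x as [x px], y as [y py]; simpl; intro H; subst.
  f_equal; apply proof_irrelevance.
Qed.

Definition one_nz : nzR := exist _ 1 R1_neq_R0.

Lemma smul_e_apply c al be :
  smulP c (e al) be = if Req_EM_T (proj1_sig al) (proj1_sig be) then c else 0.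
Proof. unfold smulP, e. destruct Req_EM_T; ring. Qed.

Lemma Q_char (u : P) :
  quasi_kernel P addP smulP u <-> exists (alpha : nzR) (c : R), u = smulP c (e alpha).
Proof.
  split.
  - intro HQ.
    destruct (classic (exists a0, u a0 <> 0)) as [[a0 Ha0]|Hn].
    + exists a0, (u a0). extensionality be. rewrite smul_e_apply.
      destruct Req_EM_T as [E|E].
      * rewrite (sig_eq_nz _ _ E). reflexivity.
      * apply NNPP; intro Hb.
        destruct (HQ 1 1) as [g Hg].
        pose proof (equal_f Hg a0) as H1. pose proof (equal_f Hg be) as H2.
        unfold addP, smulP in H1, H2.
        rewrite phi_add_lin in H1 by apply (proj2_sig a0).
        rewrite phi_add_lin in H2 by apply (proj2_sig be).
        apply Rmult_eq_reg_r in H1; [|exact Ha0].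
        apply Rmult_eq_reg_r in H2; [|exact Hb].
        apply E. apply k11_inj; try apply proj2_sig. congruence.
    + exists one_nz, 0. extensionality be. rewrite smul_e_apply.
      destruct Req_EM_T; apply NNPP; intro Hb; apply Hn; exists be; exact Hb.
  - intros [al [c Hu]] a b. subst u.
    exists (k (proj1_sig al) a b). extensionality be.
    unfold addP, smulP, e. destruct Req_EM_T as [E|E].
    + rewrite E, !Rmult_1_r. apply phi_add_lin, proj2_sig.
    + rewrite !Rmult_0_r. unfold phi_add, phi_inv. rewrite !phi_0, Rplus_0_r, phi_0. reflexivity.
Qed.

Definition fin_supp (u : P) : Prop :=
  exists L : list R, forall be : nzR, ~ In (proj1_sig be) L -> u be = 0.

Lemma gen_fin u : gen_subgroup P addP zeroP negP (quasi_kernel P addP smulP) u -> fin_supp u.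
Proof.
  induction 1.
  - exists nil. intros; reflexivity.
  - apply Q_char in H. destruct H as [al [c ->]].
    exists (proj1_sig al :: nil). intros be Hb. rewrite smul_e_apply.
    destruct Req_EM_T as [E|E]; [|reflexivity]. exfalso; apply Hb; left; exact E.
  - destruct IHgen_subgroup as [L HL]. exists L. intros be Hb. unfold negP. rewrite HL by exact Hb. ring.
  - destruct IHgen_subgroup1 as [L1 H1]. destruct IHgen_subgroup2 as [L2 H2].
    exists (L1 ++ L2). intros be Hb. unfold addP.
    rewrite H1, H2. unfold phi_add, phi_inv. rewrite !phi_0, Rplus_0_r, phi_0. reflexivity.
    all: intro; apply Hb; apply in_or_app; auto.
Qed.

Fixpoint sabs (L : list R) : R := match L with nil => 0 | x :: l => Rabs x + sabs l end.

Lemma sabs_nonneg L : 0 <= sabs L.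
Proof. induction L; simpl; [lra|]. pose proof (Rabs_pos a); lra. Qed.

Lemma sabs_big L x : In x L -> x < 1 + sabs L.
Proof.
  induction L; simpl; [tauto|]. intros [->|H].
  - pose proof (Rle_abs x); pose proof (sabs_nonneg L); lra.
  - pose proof (IHL H); pose proof (Rabs_pos a); lra.
Qed.

Theorem mainTheorem12 :
  (forall u : P,
     quasi_kernel P addP smulP u <->
     exists (alpha : nzR) (c : R), u = smulP c (e alpha)) /\
  ~ near_vector_space P addP zeroP negP smulP.
Proof.
  split; [exact Q_char|].
  intro HN. destruct HN as [_ [_ [_ [_ [_ [_ [_ [_ [_ [_ Hg]]]]]]]]]].
  destruct (gen_fin _ (Hg (fun _ => 1))) as [L HL].
  assert (Hr : 1 + sabs L <> 0) by (pose proof (sabs_nonneg L); lra).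
  specialize (HL (exist _ (1 + sabs L) Hr)). simpl in HL.
  assert (~ In (1 + sabs L) L) by (intro H; apply sabs_big in H; lra).
  specialize (HL H). lra.
Qed.
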